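(* Let $s>1$ be constant and $G\sim G_{n,p}$ with $p=\frac{\log n+\omega(n)}{n}$, $\omega(n)\to\infty$, $np=O(\log n)$. For the Birth-Death process on $G$ started from a single mutant vertex $v_0$, w.h.p. no vertex of $S_0$ is added to $N(X)$ and no vertex of $N(S_0)$ is added to $X$ during the first $\omega_0^{3/4}$ iterations.
   Context: Birth-Death process: $X\subseteq[n]$ is the mutant set (fitness $s$, others fitness 1), initially $\{v_0\}$; at each step a vertex $v$ is chosen with probability proportional to fitness and a uniformly random neighbor $u$ of $v$ takes the type of $v$. An iteration is a step in which $X$ changes. $N(A)=\{w\notin A:\exists v\in A, vw\in E(G)\}$. $\varepsilon=1/\log\log\log n$, $S_0=\{v:d(v)\le np/10\}$, $\omega_0=\frac{\varepsilon^2 np}{100\log(np)}$. W.h.p. refers to the randomness of both the graph and the process. *)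

(* Defs.v *)
From HB Require Import structures.
From mathcomp Require Import all_boot all_order all_algebra.
From mathcomp Require Import reals exp.
Set Implicit Arguments. Unset Strict Implicit. Unset Printing Implicit Defensive.
Import Order.TTheory GRing.Theory Num.Theory.
Local Open Scope ring_scope.

Section BD.
Variables (R : realType) (n : nat).

(* A simple graph on [n] = 'I_n is encoded by a set g of ordered pairs;
   the random graph G(n,p) only puts mass on sets of pairs (i,j) with i<j. *)
Definition adj (g : {set 'I_n * 'I_n}) (u v : 'I_n) : bool :=
  (u != v) && (((u, v) \in g) || ((v, u) \in g)).

Definition gnp_weight (p : R) (g : {set 'I_n * 'I_n}) : R :=
  if [forall e in g, (e.1 < e.2)%N]
  then \prod_(e : 'I_n * 'I_n | (e.1 < e.2)%N) (if e \in g then p else 1 - p)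
  else 0.

Definition deg (g : {set 'I_n * 'I_n}) (v : 'I_n) : nat := #|[set u | adj g v u]|.

Definition nbhd (g : {set 'I_n * 'I_n}) (A : {set 'I_n}) : {set 'I_n} :=
  [set w | (w \notin A) && [exists v in A, adj g v w]].

Definition S0 (p : R) (g : {set 'I_n * 'I_n}) : {set 'I_n} :=
  [set v | (deg g v)%:R <= n%:R * p / 10%:R].

Definition epsn : R := (ln (ln (ln n%:R)))^-1.
Definition omega0 (p : R) : R :=
  epsn ^+ 2 * (n%:R * p) / (100%:R * ln (n%:R * p)).
Definition iter_bound (p : R) : R := powR (omega0 p) (3%:R / 4%:R).

Definition fit (s : R) (X : {set 'I_n}) (v : 'I_n) : R := if v \in X then s else 1.

(* result of "u takes the type of v" *)
Definition upd (X : {set 'I_n}) (v u : 'I_n) : {set 'I_n} :=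
  if v \in X then u |: X else X :\ u.

(* One step of the Birth-Death process: v chosen with probability
   proportional to fitness, u a uniform random neighbour of v
   (if v has no neighbour, nothing happens). *)
Definition step_prob (s : R) (g : {set 'I_n * 'I_n}) (X Y : {set 'I_n}) : R :=
  \sum_v (fit s X v / \sum_w fit s X w) *
    (if deg g v == 0%N then (Y == X)%:R
     else \sum_(u | adj g v u) (Y == upd X v u)%:R / (deg g v)%:R).

Definition bad_change (p : R) (g : {set 'I_n * 'I_n}) (X Y : {set 'I_n}) : bool :=
  [exists w in S0 p g, (w \in nbhd g Y) && (w \notin nbhd g X)] ||
  [exists w in nbhd g (S0 p g), (w \in Y) && (w \notin X)].

(* Probability, starting from state X after c iterations, that within the next
   T steps a bad change happens at an iteration whose index is at most
   omega_0^{3/4}. (An iteration is a step in which X changes.) *)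
Fixpoint bad_within (s p : R) (g : {set 'I_n * 'I_n}) (T : nat)
    (X : {set 'I_n}) (c : nat) : R :=
  match T with
  | 0 => 0
  | T'.+1 =>
    \sum_(Y : {set 'I_n}) step_prob s g X Y *
      (if (Y != X) && ((c.+1)%:R <= iter_bound p) && bad_change p g X Y then 1
       else bad_within s p g T' Y (c + (Y != X))%N)
  end.

(* Joint probability (graph and process) that a bad change happens among the
   first omega_0^{3/4} iterations, within the first T steps of the process
   started from {v0}. *)
Definition bad_prob (s p : R) (v0 : 'I_n) (T : nat) : R :=
  \sum_(g : {set 'I_n * 'I_n}) gnp_weight p g * bad_within s p g T [set v0] 0.

End BD.

Definition pn {R : realType} (om : nat -> R) (n : nat) : R :=
  (ln n%:R + om n) / n%:R.

(* Main.v *)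
Require Import Defs.
From HB Require Import structures.
From mathcomp Require Import all_boot all_order all_algebra.
From mathcomp Require Import reals sequences exp.
From mathcomp Require Import ring lra zify.
Import Order.TTheory GRing.Theory Num.Theory.
Local Open Scope ring_scope.
Set Implicit Arguments. Unset Strict Implicit.

Section Proc.
Variables (R : realType) (n : nat) (s p : R) (g : {set 'I_n * 'I_n}) (v0 : 'I_n).

Lemma adj_sym u v : adj g u v = adj g v u.
Proof. by rewrite /adj eq_sym orbC. Qed.

Definition inball (k : nat) (w : 'I_n) : Prop :=
  exists t : seq 'I_n, (size t <= k)%N /\ path (adj g) v0 t /\ last v0 t = w.

Lemma inball_mono k k' w : (k <= k')%N -> inball k w -> inball k' w.
Proof. by move=> kk [t [st H]]; exists t; split=> //; apply: leq_trans kk. Qed.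

Lemma inball_adj k x y : inball k x -> adj g x y -> inball k.+1 y.
Proof.
move=> [t [st [pt lt]]] axy; exists (rcons t y); rewrite size_rcons ltnS st.
by rewrite rcons_path pt lt axy last_rcons.
Qed.

Lemma bad_inball c (X Y : {set 'I_n}) : (forall y, y \in Y -> inball c.+1 y) ->
  bad_change p g X Y -> exists2 w, w \in S0 p g & inball c.+2 w.
Proof.
move=> HY /orP[/existsP[w /andP[wS /andP[wN _]]]|/existsP[w /andP[wN /andP[wY _]]]].
  exists w => //; move: wN; rewrite inE => /andP[_ /existsP[y /andP[yY ayw]]].
  exact: inball_adj (HY y yY) ayw.
move: wN; rewrite inE => /andP[_ /existsP[z /andP[zS azw]]].
exists z => //; apply: inball_adj (HY w wY) _; by rewrite adj_sym.
Qed.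

Lemma fit_gt0 (X : {set 'I_n}) v : 0 < s -> 0 < fit s X v.
Proof. by move=> s0; rewrite /fit; case: ifP. Qed.

Lemma step_ge0 (X Y : {set 'I_n}) : 0 < s -> 0 <= step_prob s g X Y.
Proof.
move=> s0; apply: sumr_ge0 => v _; apply: mulr_ge0.
  apply: divr_ge0; first exact: ltW (fit_gt0 _ _ s0).
  by apply: sumr_ge0 => w _; apply: ltW (fit_gt0 _ _ s0).
case: ifP => _; first by rewrite ler0n.
by apply: sumr_ge0 => u _; apply: divr_ge0; rewrite ler0n.
Qed.

Lemma step_sum (X : {set 'I_n}) : 0 < s -> \sum_Y step_prob s g X Y <= 1.
Proof.
move=> s0; rewrite /step_prob exchange_big /=.
have H1 v : \sum_(Y : {set 'I_n}) (if deg g v == 0%N then (Y == X)%:R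
     else \sum_(u | adj g v u) (Y == upd X v u)%:R / (deg g v)%:R) = 1 :> R.
  case d0: (deg g v == 0%N).
    by rewrite (bigD1 X) //= eqxx big1 ?addr0 // => Y /negbTE ->.
  rewrite exchange_big /=.
  transitivity (\sum_(u | adj g v u) ((deg g v)%:R^-1 : R)).
    apply: eq_bigr => u _; rewrite -mulr_suml (bigD1 (upd X v u)) //= eqxx.
    by rewrite big1 ?addr0 ?mul1r // => Y /negbTE ->.
  rewrite sumr_const (_ : #|_| = deg g v); last by apply: eq_card => u; rewrite inE.
  by rewrite -[_ *+ deg g v]mulr_natr mulVf // pnatr_eq0 d0.
under eq_bigr do rewrite -mulr_sumr H1 mulr1.
rewrite -mulr_suml.
have [->|S0] := eqVneq (\sum_w fit s X w) 0; first by rewrite invr0 mulr0 ler01.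
by rewrite mulfV.
Qed.

Lemma bw_bounds T (X : {set 'I_n}) c : 0 < s -> 0 <= bad_within s p g T X c <= 1.
Proof.
move=> s0; elim: T X c => [|T IH] X c /=; first by rewrite lexx ler01.
apply/andP; split.
  apply: sumr_ge0 => Y _; apply: mulr_ge0; first exact: step_ge0.
  by case: ifP => _ //; case/andP: (IH Y (c + (Y != X))%N).
apply: le_trans (step_sum X s0); apply: ler_sum => Y _.
rewrite -[X in _ <= X]mulr1; apply: ler_wpM2l; first exact: step_ge0.
by case: ifP => _ //; case/andP: (IH Y (c + (Y != X))%N).
Qed.

Lemma step_support (X Y : {set 'I_n}) : Y != X ->
  (forall v u, adj g v u -> Y != upd X v u) -> step_prob s g X Y = 0.
Proof.
move=> YX H; apply: big1 => v _; case: (deg g v == 0%N); first by rewrite (negbTE YX) mulr0.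
apply/eqP; rewrite mulf_eq0; apply/orP; right; apply/eqP; apply: big1 => u auv; by rewrite (negbTE (H _ _ auv)) mul0r.
Qed.

Lemma bw_good K :
  (forall w k, w \in S0 p g -> inball k w -> (K < k)%N) ->
  (forall c, (c.+1)%:R <= @iter_bound R n p -> (c.+2 <= K)%N) ->
  forall T (X : {set 'I_n}) c, (forall x, x \in X -> inball c x) ->
  bad_within s p g T X c = 0.
Proof.
move=> Good hK; elim=> [//|T IH] X c HX /=; apply: big1 => Y _.
have [->|YX] := eqVneq Y X; first by rewrite /= addn0 IH // mulr0.
case: (boolP [exists v, exists u, adj g v u && (Y == upd X v u)]).
  move=> /existsP[v /existsP[u /andP[auv /eqP eY]]].
  have HY : forall y, y \in Y -> inball c.+1 y.
    move=> y; rewrite eY /upd; case: ifP => vX; rewrite !inE.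
      case/orP=> [/eqP ->|yX]; first exact: inball_adj (HX v vX) auv.
      exact: inball_mono (leqnSn c) (HX y yX).
    by case/andP=> _ yX; apply: inball_mono (leqnSn c) (HX y yX).
  rewrite /= addn1 IH //; case: ifP; last by rewrite mulr0.
  case/andP=> Hc Hb; exfalso.
  have [w wS wb] := bad_inball HY Hb.
  by have := Good _ _ wS wb; rewrite ltnNge (hK _ Hc).
move=> Hn; rewrite step_support ?mul0r // => v u auv; apply/negP => /eqP eY.
by apply: (negP Hn); apply/existsP; exists v; apply/existsP; exists u; rewrite auv eY eqxx.
Qed.

End Proc.

Section Graph.
Variables (R : realType) (n : nat) (p : R).
Local Notation T := ('I_n * 'I_n)%type.

Definition ed (x y : 'I_n) : T := if (x < y)%N then (x, y) else (y, x).

Lemma edE x y x' y' : ed x y = ed x' y' -> (x = x' /\ y = y') \/ (x = y' /\ y = x').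
Proof.
rewrite /ed; case: ifP; case: ifP => _ _ [-> ->]; tauto.
Qed.

Lemma ed_inj w : injective (ed w).
Proof. by move=> u u' /edE [[_ ->]|[-> ->]]. Qed.

Lemma ed_lt x y : x != y -> ((ed x y).1 < (ed x y).2)%N.
Proof.
move=> xy; rewrite /ed; case: ifP => h //=; move: xy h; rewrite -val_eqE /=; lia.
Qed.

Lemma ed_in (g : {set T}) x y : [forall e in g, (e.1 < e.2)%N] ->
  adj g x y -> ed x y \in g.
Proof.
move=> /forall_inP H /andP[_ /orP[h|h]]; have := H _ h => /= lt; rewrite /ed.
  by rewrite lt.
by rewrite ltnNge (ltnW lt).
Qed.

Lemma ed_adj (g : {set T}) x y : x != y -> ed x y \in g -> adj g x y.
Proof. by rewrite /adj /ed => -> /=; case: ifP => _ ->; rewrite ?orbT. Qed.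

Lemma ed_mem x y z : z = (ed x y).1 \/ z = (ed x y).2 -> z = x \/ z = y.
Proof. by rewrite /ed; case: ifP => _ /= [] ->; tauto. Qed.

Definition UP (e : T) := (e.1 < e.2)%N.

Lemma sum_prod (F : T -> bool -> R) :
  \sum_(g : {set T}) gnp_weight p g * \prod_(e | UP e) F e (e \in g) =
  \prod_(e | UP e) (p * F e true + (1 - p) * F e false).
Proof.
pose G e b := if UP e then (if b then p else 1 - p) * F e b else (if b then 0 else 1).
have step1 g : gnp_weight p g * \prod_(e | UP e) F e (e \in g) = \prod_e G e (e \in g).
  rewrite [RHS](bigID UP) /=.
  have -> : \prod_(e | ~~ UP e) G e (e \in g) = [forall e in g, UP e]%:R.
    case: forall_inP => H.
      by apply: big1 => e /negbTE Ue; rewrite /G Ue; case: ifP => // /H; rewrite Ue.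
    have : ~~ [forall e in g, UP e] by apply/forall_inP.
    rewrite negb_forall_in => /exists_inP [e eg Ue].
    rewrite (bigD1 e) //= /G (negbTE Ue) eg mul0r //.
  rewrite /gnp_weight; case: ifP => H; last by rewrite !mul0r mulr0.
  rewrite mulr1 -big_split /=; apply: eq_bigr => e Ue; rewrite /G /UP Ue.
  by case: (e \in g).
rewrite (eq_bigr _ (fun g _ => step1 g)).
transitivity (\prod_e (G e true + G e false)).
  rewrite (reindex (fun f : {ffun T -> bool} => [set e | f e])) /=; last first.
    exists (fun g : {set T} => [ffun e => e \in g]) => g _.
      by apply/ffunP => e; rewrite ffunE inE.
    by apply/setP => e; rewrite inE ffunE.
  under eq_bigr do under eq_bigr do rewrite inE.
  rewrite -bigA_distr_bigA /=; apply: eq_bigr => e _.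
  by rewrite big_bool.
rewrite [RHS]big_mkcond /=; apply: eq_bigr => e _; rewrite /G.
by case: ifP => _; rewrite ?addr0 ?add0r.
Qed.


Lemma gnp_ge0 (g : {set T}) : 0 <= p <= 1 -> 0 <= gnp_weight p g.
Proof.
case/andP=> p0 p1; rewrite /gnp_weight; case: ifP => // _.
by apply: prodr_ge0 => e _; case: ifP; rewrite // subr_ge0.
Qed.

Section Path.
Variables (v0 : 'I_n) (t : seq 'I_n).
Hypothesis ut : uniq (v0 :: t).

Definition Aset : {set T} := [set ed (nth v0 (v0 :: t) i) (nth v0 t i) | i : 'I_(size t)].
Definition Bset : {set T} := [set ed (last v0 t) u | u in ~: [set x in v0 :: t]].
Definition lam : R := expR (-2).
Definition Fw e (b : bool) : R :=
  (if e \in Aset then b%:R else 1) * (if e \in Bset then (if b then lam else 1) else 1).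

Lemma nthS i : nth v0 t i = nth v0 (v0 :: t) i.+1. Proof. by []. Qed.

Lemma zneq (i : 'I_(size t)) : nth v0 (v0 :: t) i != nth v0 (v0 :: t) i.+1.
Proof.
have si : (i < size (v0 :: t))%N by rewrite /= ltnS ltnW.
have si1 : (i.+1 < size (v0 :: t))%N by rewrite /= ltnS.
rewrite nth_uniq //; lia.
Qed.

Lemma A_sub e : e \in Aset -> UP e.
Proof. by case/imsetP => i _ ->; rewrite /UP nthS; apply: ed_lt; apply: zneq. Qed.

Lemma B_sub e : e \in Bset -> UP e.
Proof.
case/imsetP => u; rewrite !inE => uX ->; apply: ed_lt.
by apply: contraNneq uX => <-; apply: mem_last.
Qed.

Lemma AB_disj e : e \in Aset -> e \notin Bset.
Proof.
case/imsetP => i _ ->; apply/negP; case/imsetP => u; rewrite !inE => uX.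
move/esym => /edE.
have Hi : nth v0 (v0 :: t) i \in v0 :: t by apply: mem_nth; rewrite /= ltnS ltnW.
have Hi1 : nth v0 t i \in v0 :: t by rewrite nthS; apply: mem_nth; rewrite /= ltnS.
by case=> [[_ E]|[_ E]]; move: uX; rewrite E -in_cons ?Hi ?Hi1.
Qed.

Lemma card_A : #|Aset| = size t.
Proof.
rewrite card_imset ?card_ord // => i j /edE; rewrite !nthS.
have si : (i < size (v0 :: t))%N by rewrite /= ltnS ltnW.
have sj : (j < size (v0 :: t))%N by rewrite /= ltnS ltnW.
have si1 : (i.+1 < size (v0 :: t))%N by rewrite /= ltnS.
have sj1 : (j.+1 < size (v0 :: t))%N by rewrite /= ltnS.
case=> [[/eqP E _]|[/eqP E1 /eqP E2]].
  by move: E; rewrite nth_uniq // => /eqP/val_inj.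
move: E1 E2; rewrite !nth_uniq // => /eqP E1 /eqP E2; exfalso; lia.
Qed.

Lemma card_B : #|Bset| = (n - (size t).+1)%N.
Proof.
rewrite card_imset; last exact: ed_inj.
have h1 := cardsC [set x in v0 :: t]; have h2 := card_ord n.
rewrite cardsE card_ord in h1; move/card_uniqP: ut => /= h4.
have hle : ((size t).+1 <= n)%N by rewrite -h4 -[X in (_ <= X)%N]h1 leq_addr.
apply/eqP; rewrite -(eqn_add2l #|v0 :: t|) h1 h4 subnKC //.
Qed.

Lemma indic (g : {set T}) : [forall e in g, UP e] ->
  (path (adj g) v0 t && (last v0 t \in S0 p g))%:R <=
  expR (2 * (n%:R * p / 10%:R)) * \prod_(e | UP e) Fw e (e \in g).
Proof.
move=> gU; have lam0 : 0 < lam by apply: expR_gt0.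
case H: (path (adj g) v0 t && (last v0 t \in S0 p g)); last first.
  apply: mulr_ge0; first exact: expR_ge0.
  apply: prodr_ge0 => e _; rewrite /Fw; apply: mulr_ge0.
    by case: ifP; case: (e \in g).
  by case: ifP => //; case: ifP => // _ _; apply: ltW.
case/andP: H => pt wS.
rewrite /Fw big_split /= [X in expR _ * (X * _)]big1 ?mul1r; last first.
  move=> e _; rewrite /Fw; case: ifP => // /imsetP[i _ ->].
  rewrite ed_in // ?nthS //; move/pathP: pt => /(_ v0 i (ltn_ord i)); by rewrite nthS.
set c := #|[pred e | UP e && ((e \in Bset) && (e \in g))]|.
have -> : \prod_(e | UP e) (if e \in Bset then (if e \in g then lam else 1) else 1) =
  lam ^+ c.
  rewrite -prodr_const; rewrite [RHS]big_mkcond [LHS]big_mkcond /=.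
  apply: eq_bigr => e _; rewrite !inE.
  by case: (UP e); case: (e \in Bset); case: (e \in g).
have cdeg : (c <= deg g (last v0 t))%N.
  apply: leq_trans (leq_imset_card (ed (last v0 t)) [set u | adj g (last v0 t) u]).
  apply: subset_leq_card; apply/subsetP => e; rewrite inE => /andP[_ /andP[eB eg]].
  move: eB => /imsetP[u]; rewrite !inE => uX eE; apply/imsetP; exists u => //.
  rewrite inE; apply: ed_adj; last by rewrite -eE.
  by apply: contraNneq uX => <-; apply: mem_last.
move: wS; rewrite inE => wS.
rewrite /lam -expRM_natl -expRD; apply: le_trans (expR_ge1Dx _).
have : (c%:R <= (deg g (last v0 t))%:R :> R) by rewrite ler_nat.
rewrite /=; lra.
Qed.


Lemma expect : 0 <= p <= 1 ->
  \sum_(g : {set T}) gnp_weight p g * (path (adj g) v0 t && (last v0 t \in S0 p g))%:R <=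
  expR (2 * (n%:R * p / 10%:R)) * (p ^+ size t * (p * lam + (1 - p)) ^+ (n - (size t).+1)).
Proof.
move=> p01.
apply: (@le_trans _ _ (\sum_(g : {set T}) gnp_weight p g *
   (expR (2 * (n%:R * p / 10%:R)) * \prod_(e | UP e) Fw e (e \in g)))).
  apply: ler_sum => g _; case gU: [forall e in g, UP e].
    by apply: ler_wpM2l; [exact: gnp_ge0 | exact: indic].
  by rewrite /gnp_weight gU !mul0r.
rewrite (eq_bigr (fun g => expR (2 * (n%:R * p / 10%:R)) *
   (gnp_weight p g * \prod_(e | UP e) Fw e (e \in g)))); last by move=> g _; rewrite mulrCA.
rewrite -mulr_sumr sum_prod; apply: ler_wpM2l; first exact: expR_ge0.
rewrite le_eqVlt; apply/orP; left; apply/eqP.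
rewrite -card_B -card_A -!prodr_const [LHS]big_mkcond [\prod_(e in Aset) _]big_mkcond [\prod_(e in Bset) _]big_mkcond -big_split /=.
apply: eq_bigr => e _; rewrite /Fw.
case eA: (e \in Aset).
  by rewrite (A_sub eA) (negbTE (AB_disj eA)) /= !mulr1 mulr0 addr0.
case eB: (e \in Bset).
  by rewrite (B_sub eB) /= !mul1r mulr1.
case: ifP => _; last by rewrite mulr1.
by rewrite /= !mulr1 addrC subrK.
Qed.

End Path.

End Graph.

Section Assemble.
Variables (R : realType) (n : nat) (s p : R) (v0 : 'I_n) (K : nat).
Hypothesis s0 : 0 < s.
Hypothesis p01 : 0 <= p <= 1.
Hypothesis hK : forall c, (c.+1)%:R <= @iter_bound R n p -> (c.+2 <= K)%N.

Definition ind (g : {set 'I_n * 'I_n}) k (t : k.-tuple 'I_n) : R :=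
  (uniq (v0 :: t) && path (adj g) v0 t && (last v0 t \in S0 p g))%:R.

Lemma bw_walk g T :
  bad_within s p g T [set v0] 0 <= \sum_(k < K.+1) \sum_(t : k.-tuple 'I_n) ind g t.
Proof.
have sum0 : 0 <= \sum_(k < K.+1) \sum_(t : k.-tuple 'I_n) ind g t.
  by apply: sumr_ge0 => k _; apply: sumr_ge0 => t _; rewrite /ind ler0n.
case: (boolP [exists k : 'I_K.+1, exists t : k.-tuple 'I_n,
   uniq (v0 :: t) && path (adj g) v0 t && (last v0 t \in S0 p g)]).
  case/existsP=> k /existsP[t H].
  apply: le_trans (_ : 1 <= _); first by case/andP: (bw_bounds p g T [set v0] 0 s0).
  rewrite (bigD1 k) //= (bigD1 t) //= {1}/ind H -addrA lerDl.
  apply: addr_ge0; first by apply: sumr_ge0 => t' _; rewrite /ind ler0n.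
  by apply: sumr_ge0 => k' _; apply: sumr_ge0 => t' _; rewrite /ind ler0n.
move=> Hn; rewrite (@bw_good R n s p g v0 K) //.
- move=> w k wS [t [st [pt lt]]]; rewrite ltnNge; apply/negP => kK.
  apply: (negP Hn); rewrite -lt in wS; move: wS.
  case: (shortenP pt) => t' pt' ut' sub wS'.
  have st' : (size t' < K.+1)%N.
    rewrite ltnS; apply: leq_trans kK; apply: leq_trans st.
    by apply: uniq_leq_size => //; case/andP: ut'.
  apply/existsP; exists (Ordinal st'); apply/existsP; exists (in_tuple t').
  by apply/andP; split; [apply/andP; split|].
- by move=> x; rewrite inE => /eqP ->; exists [::].
Qed.

Lemma bad_bound T :
  bad_prob s p v0 T <= \sum_(k < K.+1) (n ^ k)%:R *
    (expR (2 * (n%:R * p / 10%:R)) * (p ^+ k * (p * lam R + (1 - p)) ^+ (n - k.+1))).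
Proof.
have q0 : 0 <= p * lam R + (1 - p).
  apply: addr_ge0; first by apply: mulr_ge0; [case/andP: p01 | apply: ltW; apply: expR_gt0].
  by rewrite subr_ge0; case/andP: p01.
apply: (@le_trans _ _ (\sum_(g : {set 'I_n * 'I_n}) gnp_weight p g *
   \sum_(k < K.+1) \sum_(t : k.-tuple 'I_n) ind g t)).
  apply: ler_sum => g _; apply: ler_wpM2l; first exact: gnp_ge0.
  exact: bw_walk.
under eq_bigr do rewrite mulr_sumr.
rewrite exchange_big /=; apply: ler_sum => k _.
under eq_bigr do rewrite mulr_sumr.
rewrite exchange_big /=.
apply: (@le_trans _ _ (\sum_(t : k.-tuple 'I_n)
   (expR (2 * (n%:R * p / 10%:R)) * (p ^+ k * (p * lam R + (1 - p)) ^+ (n - k.+1))))).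
  apply: ler_sum => t _; case ut: (uniq (v0 :: t)).
    have := expect ut p01; rewrite size_tuple; apply: le_trans.
    by rewrite le_eqVlt; apply/orP; left; apply/eqP; apply: eq_bigr => g _; rewrite /ind ut.
  rewrite big1; last by move=> g _; rewrite /ind ut /= mulr0.
  apply: mulr_ge0; first exact: expR_ge0.
  by apply: mulr_ge0; [apply: exprn_ge0; case/andP: p01 | apply: exprn_ge0].
by rewrite sumr_const card_tuple card_ord [(n ^ k)%:R * _]mulr_natl.
Qed.

End Assemble.

Section Anal.
Variable R : realType.

Lemma pw (x : R) k : 0 <= x -> (x `^ (k.+1%:R^-1)) ^+ k.+1 = x.
Proof.
move=> x0; rewrite -powR_mulrn ?powR_ge0 // -powRrM mulVf ?pnatr_eq0 //.
by rewrite powRr1.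
Qed.

Lemma lnle (x : R) k : 0 < x -> ln x <= k.+1%:R * x `^ (k.+1%:R^-1).
Proof.
move=> x0; have y0 : 0 < x `^ (k.+1%:R^-1) by apply: powR_gt0.
rewrite -{1}(pw k (ltW x0)) lnXn // mulr_natl.
by apply: ler_wMn2r; exact: ltW (ln_sublinear y0).
Qed.

Lemma x_le_expR (x : R) : x <= expR x.
Proof. have := expR_ge1Dx x; lra. Qed.

Lemma sum_bound (n K : nat) (p L lam : R) : 0 <= p <= 1 -> n%:R * p = L -> 1 <= L ->
  lam = expR (-2) ->
  \sum_(k < K.+1) (n ^ k)%:R * (expR (2 * (n%:R * p / 10%:R)) *
     (p ^+ k * (p * lam + (1 - p)) ^+ (n - k.+1)))
  <= expR (2 * K.+1%:R + K%:R * ln L - 7 / 15 * L).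
Proof.
move=> /andP[p0 p1] npL L1 elam.
have lam0 : 0 < lam by rewrite elam expR_gt0.
have lam13 : lam <= 1/3.
  have h1 : expR 2 * lam = 1 by rewrite elam expRxMexpNx_1.
  have h2 := expR_ge1Dx (2 : R); nra.
set q := p * lam + (1 - p).
have q0 : 0 <= q by rewrite /q; nra.
have qe : q <= expR (- (2 / 3 * p)).
  apply: le_trans (expR_ge1Dx _); rewrite /q; nra.
set M := L ^+ K * expR (L / 5 - 2 / 3 * L + 2 / 3 * K.+1%:R).
have L0 : 0 < L by lra.
apply: (@le_trans _ _ (\sum_(k < K.+1) M)).
  apply: ler_sum => -[k /= kK] _.
  set m := (n - k.+1)%N.
  have Hm : n%:R <= m%:R + k.+1%:R :> R.
    by rewrite -natrD ler_nat /m; lia.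
  rewrite (_ : _ * _ = L ^+ k * (expR (2 * (n%:R * p / 10%:R)) * q ^+ m)); last by rewrite natrX -npL exprMn; ring.
  rewrite /M.
  apply: ler_pM.
  - by apply: exprn_ge0; lra.
  - by apply: mulr_ge0; [exact: expR_ge0 | apply: exprn_ge0].
  - by apply: ler_weXn2l => //; rewrite -ltnS.
  apply: (@le_trans _ _ (expR (2 * (L / 10)) * expR (- (2 / 3 * p)) ^+ m)).
    rewrite -npL; apply: ler_wpM2l; first exact: expR_ge0.
    by apply: lerXn2r => //; rewrite nnegrE // expR_ge0.
  rewrite -expRM_natl -expRD ler_expR.
  have hk : k.+1%:R <= K.+1%:R :> R by rewrite ler_nat.
  have hp : p * k.+1%:R <= k.+1%:R by have := ler0n R k.+1; nra.
  have hpm : p * n%:R <= p * m%:R + p * k.+1%:R by nra.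
  nra.
rewrite sumr_const card_ord -[_ *+ K.+1]mulr_natl.
have eL : L ^+ K = expR (K%:R * ln L) by rewrite expRM_natl lnK // posrE.
rewrite /M eL -expRD.
apply: (@le_trans _ _ (expR K.+1%:R * expR (K%:R * ln L + (L / 5 - 2 / 3 * L + 2 / 3 * K.+1%:R)))).
  by apply: ler_wpM2r; [exact: expR_ge0 | exact: x_le_expR].
rewrite -expRD ler_expR.
have := ler0n R K.+1; lra.
Qed.


Lemma ln_ge (x : R) : 0 < x -> 1 - x^-1 <= ln x.
Proof.
move=> x0; have hi : 0 < x^-1 by rewrite invr_gt0.
have := @le_ln1Dx R (x^-1 - 1) ltac:(lra).
rewrite addrC subrK lnV ?posrE //; lra.
Qed.

Lemma lnmono (x y : R) : 0 < x -> x <= y -> ln x <= ln y.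
Proof. by move=> x0 xy; rewrite ler_ln // posrE //; apply: lt_le_trans xy. Qed.

End Anal.

Unset Implicit Arguments.
Set Strict Implicit.

Theorem mainTheorem9 (R : realType) (s : R) (om : nat -> R) :
  1 < s ->
  (forall M : R, exists N : nat, forall n : nat, (N <= n)%N -> M <= om n) ->
  (exists C : R, exists N : nat, forall n : nat, (N <= n)%N ->
      n%:R * pn om n <= C * ln n%:R) ->
  forall eps : R, 0 < eps ->
  exists N : nat, forall n : nat, (N <= n)%N ->
    forall (v0 : 'I_n) (T : nat), bad_prob s (pn om n) v0 T <= eps.
Proof.
move=> s1 omInf [C [N3 HC]] eps eps0.
have s0 : 0 < s by lra.
set T0 : R := 100 + `|ln eps|.
have T0ge : 100 <= T0 by rewrite /T0; have := normr_ge0 (ln eps); lra.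
have lneps : 100 - T0 <= ln eps by rewrite /T0; have := ler_norm (- ln eps); rewrite normrN; lra.
clearbody T0.
have [N1 HN1] := omInf (T0 ^+ 8).
set E3 : R := expR (expR (expR 1)).
set D : R := `|C| * 2.
exists (maxn (maxn N1 N3) (maxn (Num.truncn E3).+1 (maxn (Num.truncn (D ^+ 2)).+1 1))).
move=> n; rewrite !geq_max => /andP[/andP[hN1 hN3] /andP[hE3 /andP[hD hn1]]] v0 T.
have n0 : 0 < n%:R :> R by rewrite ltr0n.
have nE3 : E3 <= n%:R.
  by apply: le_trans (ltW (truncnS_gt E3)) _; rewrite ler_nat.
have nD : D ^+ 2 <= n%:R.
  by apply: le_trans (ltW (truncnS_gt (D ^+ 2))) _; rewrite ler_nat.
set L := ln n%:R + om n.
have omL := HN1 n hN1.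
have lnn0 : 0 <= ln (n%:R : R) by apply: ln_ge0; rewrite ler1n.
have T08 : 100 <= T0 ^+ 8.
  apply: (le_trans T0ge); rewrite -[X in X <= _]expr1; apply: ler_weXn2l => //; lra.
have LT : T0 ^+ 8 <= L by rewrite /L; lra.
have L1 : 1 <= L by lra.
have L0 : 0 < L by lra.
have npL : n%:R * pn om n = L by rewrite /pn mulrCA mulfV ?mulr1 // gt_eqF.
set p := pn om n.
have p0 : 0 <= p by rewrite /p /pn divr_ge0 // ltW.
have p1 : p <= 1.
  have hC := HC n hN3.
  set y := (n%:R : R) `^ (1.+1%:R^-1).
  have y0 : 0 <= y by apply: powR_ge0.
  have y2 : y ^+ 2 = n%:R by apply: pw; apply: ltW.
  have D0 : 0 <= D by rewrite /D mulr_ge0.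
  have yD : D <= y by rewrite -(@ler_pXn2r _ 2) ?nnegrE // y2.
  have hl := lnle 1 n0.
  have hc : C * ln n%:R <= `|C| * ln n%:R by apply: ler_wpM2r => //; apply: ler_norm.
  have hc2 : `|C| * ln n%:R <= D * y.
    rewrite /D -mulrA; apply: ler_wpM2l => //; rewrite -/y in hl; lra.
  have hc3 : D * y <= y * y by apply: ler_wpM2r.
  have : n%:R * p <= n%:R * 1.
    have yy : y * y = n%:R by rewrite -expr2.
    rewrite mulr1 /p; lra.
  by rewrite ler_pM2l.
have p01 : 0 <= p <= 1 by rewrite p0 p1.
set ib := @iter_bound R n p.
have ib0 : 0 <= ib by apply: powR_ge0.
set K := (Num.truncn ib).+2.
have hK : forall c, (c.+1)%:R <= ib -> (c.+2 <= K)%N.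
  by move=> c h; rewrite /K !ltnS; apply: ltnW; rewrite truncn_ge_nat.
apply: le_trans (@bad_bound R n s p v0 K s0 p01 hK T) _.
apply: le_trans (@sum_bound R n K p L (lam R) p01 npL L1 erefl) _.
apply: le_trans (_ : _ <= expR (ln eps)) _; last by rewrite lnK // posrE.
rewrite ler_expR.
set t := L `^ (7.+1%:R^-1).
have t0 : 0 <= t by apply: powR_ge0.
have tL : t ^+ 8 = L by apply: pw; apply: ltW.
have tT : T0 <= t by rewrite -(@ler_pXn2r _ 8) ?nnegrE // ?tL //; lra.
have lnL := lnle 7 L0; rewrite -/t in lnL.
have lnL0 : 0 <= ln L by apply: ln_ge0.
have z1 : 1 <= ln (ln (ln (n%:R : R))).
  have h1 : expR (expR 1) <= ln (n%:R : R).
    by rewrite -[X in X <= _]expRK; apply: lnmono => //; apply: expR_gt0.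
  have h2 : expR 1 <= ln (ln (n%:R : R)).
    by rewrite -[X in X <= _]expRK; apply: lnmono => //; apply: expR_gt0.
  by rewrite -[X in X <= _](expRK 1); apply: lnmono => //; apply: expR_gt0.
have e1 : @epsn R n ^+ 2 <= 1.
  rewrite /epsn; move: z1; set z := ln (ln (ln _)) => z1.
  have hz : 0 < z^-1 by rewrite invr_gt0; lra.
  have hz1 : z^-1 <= 1 by rewrite invf_le1 //; lra.
  rewrite expr2; nra.
have e0 : 0 <= @epsn R n ^+ 2 by apply: sqr_ge0.
have lnLh : 1 / 2 <= ln L.
  have := ln_ge L0; have : L * L^-1 = 1 by rewrite mulfV // gt_eqF.
  have : 0 < L^-1 by rewrite invr_gt0.
  nra.
have om0 : 0 <= @omega0 R n p.
  rewrite /omega0 npL; apply: divr_ge0; first by apply: mulr_ge0 => //; lra.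
  by apply: mulr_ge0 => //; lra.
have omL' : @omega0 R n p <= L.
  rewrite /omega0 npL ler_pdivrMr; last by apply: mulr_gt0; lra.
  nra.
have ibt : ib <= t ^+ 6.
  rewrite /ib /iter_bound.
  apply: le_trans (ge0_ler_powR _ _ _ omL') _; rewrite ?nnegrE //; try lra.
  rewrite (_ : 3%:R / 4%:R = 7.+1%:R^-1 * 6%:R); last by rewrite /=; field.
  by rewrite powRrM powR_mulrn.
have Kib : K%:R <= ib + 2.
  by rewrite /K -addn2 natrD lerD2r truncn_le.
have K0 : 0 <= K%:R :> R by apply: ler0n.
have KlnL : K%:R * ln L <= (t ^+ 6 + 2) * (8 * t).
  by apply: ler_pM => //; lra.
have ex : (t ^+ 6 + 2) * (8 * t) = 8 * t ^+ 7 + 16 * t by rewrite !exprS; ring.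
have h8 : 100 * t ^+ 7 <= t ^+ 8.
  by have := exprn_ge0 7 t0; rewrite [t ^+ 8]exprS; nra.
have h7 : t ^+ 6 <= t ^+ 7.
  rewrite [t ^+ 7]exprS; have := exprn_ge0 6 t0; nra.
have h6 : t <= t ^+ 6.
  have : 1 <= t ^+ 5 by apply: exprn_ege1; lra.
  rewrite [t ^+ 6]exprS; nra.
have hKs : K.+1%:R = K%:R + 1 :> R by rewrite -addn1 natrD.
rewrite hKs; rewrite ex in KlnL; lra.
Qed.
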